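(* Let $K\ge1$, $T\ge1$ and $\ell_1,\dots,\ell_T\in[0,1]^K$, and suppose $H^{\mathrm{ah}}_T\ge L^*_T$. Then the cumulative loss variance for AdaHedge satisfies \[ V^{\mathrm{ah}}_T\le\frac{L^*_T(T-L^*_T)}{T}+2\Delta^{\mathrm{ah}}_T. \]
   Context: Hedge setting: $K$ experts; in round $t$ the learner chooses a probability vector $w_t$, then $\ell_t$ is revealed and the learner suffers $h_t=\sum_kw_{t,k}\ell_{t,k}$. Write $L_{t,k}=\sum_{s=1}^t\ell_{s,k}$ ($L_{0,k}=0$), $L^*_t=\min_kL_{t,k}$, $H_T=\sum_{t\le T}h_t$. Exponential weights with learning rate $\eta\in(0,\infty]$ at time $t$: $w_{t,k}=e^{-\eta L_{t-1,k}}/\sum_je^{-\eta L_{t-1,j}}$ if $\eta<\infty$; for $\eta=\infty$, $w_t$ uniform on $\{k:L_{t-1,k}=L^*_{t-1}\}$. With learning rate $\eta_t$ in round $t$: mix loss $m_t=-\frac1{\eta_t}\ln\sum_kw_{t,k}e^{-\eta_t\ell_{t,k}}$ if $\eta_t<\infty$, $m_t=L^*_t-L^*_{t-1}$ if $\eta_t=\infty$; mixability gap $\delta_t=h_t-m_t$; loss variance $v_t=\sum_kw_{t,k}(\ell_{t,k}-h_t)^2$. AdaHedge: $\Delta^{\mathrm{ah}}_0=0$; in round $t$, $\eta^{\mathrm{ah}}_t=\ln K/\Delta^{\mathrm{ah}}_{t-1}$ ($=\infty$ if $\Delta^{\mathrm{ah}}_{t-1}=0$), weights are exponential weights with learning rate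 $\eta^{\mathrm{ah}}_t$ from $L_{t-1}$, and $\Delta^{\mathrm{ah}}_t=\Delta^{\mathrm{ah}}_{t-1}+\delta^{\mathrm{ah}}_t$. $H^{\mathrm{ah}}_T$ is AdaHedge's cumulative loss and $V^{\mathrm{ah}}_T=\sum_{t\le T}v^{\mathrm{ah}}_t$. *)

(* Defs.v *)
From HB Require Import structures.
From mathcomp Require Import all_boot all_order all_algebra.
From mathcomp Require Import reals.
From mathcomp Require Import sequences exp.
Set Implicit Arguments. Unset Strict Implicit. Unset Printing Implicit Defensive.
Import Order.TTheory GRing.Theory Num.Theory.
Local Open Scope ring_scope.

Section AdaHedge.
Variables (R : realType) (K : nat) (loss : nat -> 'I_K -> R).
(* loss t k = ell_{t,k}, for rounds t = 1, 2, ... (loss 0 is never used) *)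

Definition cumL (t : nat) (k : 'I_K) : R := \sum_(1 <= s < t.+1) loss s k.

(* minimum over the experts (K >= 1 in the theorem; 0 if there are none) *)
Definition minL (f : 'I_K -> R) : R :=
  if [pick k : 'I_K] is Some k0 then \big[Num.min/f k0]_k f k else 0.

Definition Lstar (t : nat) : R := minL (cumL t).

(* learning rate: Some eta is a finite eta, None is eta = infinity *)
Definition expw (eta : option R) (Lp : 'I_K -> R) (k : 'I_K) : R :=
  match eta with
  | Some e => expR (- (e * Lp k)) / \sum_(j : 'I_K) expR (- (e * Lp j))
  | None => if Lp k == minL Lp
            then (#|[set j : 'I_K | Lp j == minL Lp]|%:R)^-1 else 0
  end.

Definition ah_eta (D : R) : option R :=
  if D == 0 then None else Some (ln (K%:R) / D).

Definition hloss (w : 'I_K -> R) (t : nat) : R := \sum_k w k * loss t k.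

Definition mixloss (eta : option R) (w : 'I_K -> R) (t : nat) : R :=
  match eta with
  | Some e => - (e^-1 * ln (\sum_k w k * expR (- (e * loss t k))))
  | None => Lstar t - Lstar t.-1
  end.

Definition lvar (w : 'I_K -> R) (t : nat) : R :=
  \sum_k w k * (loss t k - hloss w t) ^+ 2.

Fixpoint ah_Delta (t : nat) : R :=
  match t with
  | 0 => 0
  | s.+1 =>
      let eta := ah_eta (ah_Delta s) in
      let w := expw eta (cumL s) in
      ah_Delta s + (hloss w s.+1 - mixloss eta w s.+1)
  end.

Definition ah_w (t : nat) : 'I_K -> R := expw (ah_eta (ah_Delta t.-1)) (cumL t.-1).

Definition ah_H (T : nat) : R := \sum_(1 <= t < T.+1) hloss (ah_w t) t.
Definition ah_V (T : nat) : R := \sum_(1 <= t < T.+1) lvar (ah_w t) t.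

End AdaHedge.

(* Main.v *)
Set Warnings "-notation-overridden,-ambiguous-paths".
Require Import Defs.
From HB Require Import structures.
From mathcomp Require Import all_boot all_order all_algebra.
From mathcomp Require Import reals interval_inference.
From mathcomp Require Import sequences exp convex.
From mathcomp Require Import ring lra.
Import Order.TTheory GRing.Theory Num.Theory.
Local Open Scope ring_scope.
Set Implicit Arguments. Unset Strict Implicit. Unset Printing Implicit Defensive.

Lemma expR_conv (R : realType) (s y : R) : 0 <= s -> s <= 1 ->
  expR (s * y) <= 1 - s + s * expR y.
Proof.
move=> s0 s1.
have := @convex_expR R (Itv01 s0 s1) y 0.
rewrite !convRE /= mulr0 addr0 expR0 mulr1 => H.
by rewrite addrC; apply: le_trans H _; rewrite le_eqVlt eqxx.
Qed.

Section Gen.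
Variables (R : realType) (K : nat) (hK : (1 <= K)%N).

Lemma minL_le (f : 'I_K -> R) k : minL f <= f k.
Proof.
rewrite /minL; case: pickP => [k0 _|/(_ k)//].
exact: bigmin_le.
Qed.

Lemma minL_ex (f : 'I_K -> R) : exists k, minL f = f k.
Proof.
have k0 : 'I_K by exists 0%N.
case: (arg_minP f (P := xpredT) (i0 := k0)) => // i _ Hi.
exists i; apply/le_anti; rewrite minL_le /=.
rewrite /minL; case: pickP => [k1 _|/(_ k0)//].
by apply: le_bigmin; [exact: Hi | move=> j _; exact: Hi].
Qed.

Lemma expw_ge0 eta (L : 'I_K -> R) k : 0 <= expw eta L k.
Proof.
case: eta => [e|] /=.
  by rewrite divr_ge0 // ?expR_ge0 // sumr_ge0 // => j _; rewrite expR_ge0.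
by case: ifP => // _; rewrite invr_ge0 ler0n.
Qed.

Lemma expw_sum eta (L : 'I_K -> R) : \sum_k expw eta L k = 1.
Proof.
have k0 : 'I_K by exists 0%N.
case: eta => [e|] /=.
  rewrite -mulr_suml mulfV // gt_eqF // (bigD1 k0) //= ltr_wpDr //.
    by rewrite sumr_ge0 // => j _; rewrite expR_ge0.
  exact: expR_gt0.
rewrite -big_mkcond /= sumr_const cardsE -[_^-1 *+ _]mulr_natr.
case: (minL_ex L) => k Hk.
apply: mulVf; rewrite pnatr_eq0 -lt0n; apply/card_gt0P; exists k.
by apply/eqP; rewrite Hk.
Qed.

Definition Phi (eta : option R) (L : 'I_K -> R) : R :=
  match eta with
  | Some e => - (e^-1 * ln (\sum_k expR (- (e * L k))))
  | None => minL L
  end.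

Lemma sumexp_gt0 e (L : 'I_K -> R) : 0 < \sum_k expR (- (e * L k)).
Proof.
have k0 : 'I_K by exists 0%N.
rewrite (bigD1 k0) //= ltr_wpDr ?expR_gt0 //.
by rewrite sumr_ge0 // => j _; rewrite expR_ge0.
Qed.

Lemma Phi_le_min e (L : 'I_K -> R) : 0 < e -> Phi (Some e) L <= minL L.
Proof.
move=> e0 /=; case: (minL_ex L) => k Hk.
have H1 : expR (- (e * L k)) <= \sum_j expR (- (e * L j)).
  rewrite (bigD1 k) //= lerDl.
  by rewrite sumr_ge0 // => j _; rewrite expR_ge0.
have := H1; rewrite -ler_ln ?posrE ?expR_gt0 ?sumexp_gt0 // expRK => H2.
have ei : 0 <= e^-1 by rewrite invr_ge0 ltW.
have := ler_wpM2l ei H2.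
rewrite mulrN mulKf ?lt0r_neq0 // Hk; lra.
Qed.

Lemma Phi_ge e (L : 'I_K -> R) : 0 < e -> minL L - ln K%:R / e <= Phi (Some e) L.
Proof.
move=> e0 /=.
have H1 : \sum_j expR (- (e * L j)) <= K%:R * expR (- (e * minL L)).
  apply: le_trans (_ : \sum_(j : 'I_K) expR (- (e * minL L)) <= _).
    apply: ler_sum => j _; rewrite ler_expR lerN2 ler_pM2l //; exact: minL_le.
  by rewrite sumr_const card_ord mulr_natl.
have Kp : 0 < K%:R :> R by rewrite ltr0n.
have := H1; rewrite -ler_ln ?posrE ?mulr_gt0 ?expR_gt0 ?sumexp_gt0 //.
rewrite lnM ?posrE ?expR_gt0 // expRK => H2.
have -> : minL L - ln K%:R / e = - (e^-1 * (ln K%:R - e * minL L)).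
  by field; rewrite lt0r_neq0.
by rewrite lerN2 ler_pM2l ?invr_gt0 //; lra.
Qed.

Lemma Phi_mono e e' (L : 'I_K -> R) : 0 < e' -> e' <= e ->
  Phi (Some e) L + ln K%:R / e <= Phi (Some e') L + ln K%:R / e'.
Proof.
move=> e'0 e'e /=.
have e0 : 0 < e by apply: lt_le_trans e'e.
have Kp : 0 < K%:R :> R by rewrite ltr0n.
set S := \sum_k expR (- (e * L k)).
have S0 : 0 < S by exact: sumexp_gt0.
set s := e' / e.
have s0 : 0 <= s by rewrite divr_ge0 // ltW.
have s1 : s <= 1 by rewrite ler_pdivrMr // mul1r.
set m := S / K%:R.
have m0 : 0 < m by rewrite divr_gt0.
set c := ln m.
have key : \sum_k expR (- (e' * L k)) <= K%:R * expR (s * c).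
  apply: le_trans (_ : \sum_k expR (s * c) * (1 - s + s * (expR (- (e * L k)) / m)) <= _).
    apply: ler_sum => k _.
    have -> : expR (- (e' * L k)) = expR (s * c) * expR (s * (- (e * L k) - c)).
      rewrite -expRD; congr expR; rewrite /s; field; exact: lt0r_neq0.
    rewrite ler_wpM2l ?expR_ge0 //.
    have -> : expR (- (e * L k)) / m = expR (- (e * L k) - c).
      by rewrite expRB /c lnK.
    exact: expR_conv.
  rewrite -mulr_sumr mulrC ler_wpM2r ?expR_ge0 //.
  rewrite big_split /= sumr_const card_ord -mulr_sumr -mulr_suml -/S.
  have -> : S / m = K%:R by rewrite /m; field; apply/andP; split; apply: lt0r_neq0.
  by rewrite -[(1 - s) *+ K]mulr_natr -mulrDl subrK mul1r.
have S'0 := sumexp_gt0 e' L.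
have := key; rewrite -ler_ln ?posrE ?mulr_gt0 ?expR_gt0 //.
rewrite lnM ?posrE ?expR_gt0 // expRK /c /m ln_div ?posrE // => H.
have ei : 0 <= e'^-1 by rewrite invr_ge0 ltW.
have := ler_wpM2l ei H => H2.
have E : e'^-1 * (ln K%:R + s * (ln S - ln K%:R)) =
  e^-1 * ln S - ln K%:R / e + ln K%:R / e'.
  by rewrite /s; field; apply/andP; split; apply: lt0r_neq0.
lra.
Qed.

Lemma jensen_mix e (w l : 'I_K -> R) : 0 <= e ->
  (forall k, 0 <= w k) -> \sum_k w k = 1 -> (forall k, 0 <= l k) ->
  - (e^-1 * ln (\sum_k w k * expR (- (e * l k)))) <= \sum_k w k * l k.
Proof.
move=> e0 w0 w1 l0.
have h0 : 0 <= \sum_k w k * l k by rewrite sumr_ge0 // => k _; rewrite mulr_ge0.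
case: (eqVneq e 0) => [->|en0]; first by rewrite invr0 !mul0r oppr0.
have ep : 0 < e by rewrite lt0r en0.
set h := \sum_k w k * l k.
have J : expR (- (e * h)) <= \sum_k w k * expR (- (e * l k)).
  apply: le_trans (_ : \sum_k w k * (expR (- (e * h)) * (1 - e * (l k - h))) <= _).
    rewrite le_eqVlt; apply/orP; left; apply/eqP.
    transitivity (\sum_k (expR (- (e * h)) * w k - expR (- (e * h)) * e * (w k * l k)
                   + expR (- (e * h)) * e * h * w k)).
      rewrite big_split /= sumrB -!mulr_sumr w1 -/h; ring.
    by apply: eq_bigr => k _; ring.
  apply: ler_sum => k _; rewrite ler_wpM2l //.
  have -> : expR (- (e * l k)) = expR (- (e * h)) * expR (- (e * (l k - h))).
    by rewrite -expRD; congr expR; ring.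
  rewrite ler_wpM2l ?expR_ge0 //.
  by apply: le_trans (expR_ge1Dx _); rewrite le_eqVlt; apply/orP; left; apply/eqP; ring.
have P : 0 < \sum_k w k * expR (- (e * l k)) by apply: lt_le_trans J; exact: expR_gt0.
have := J; rewrite -ler_ln ?posrE ?expR_gt0 // expRK => H.
have ei : 0 <= e^-1 by rewrite invr_ge0 ltW.
have := ler_wpM2l ei H; rewrite mulrN mulKf //; lra.
Qed.

End Gen.

Section AH.
Variables (R : realType) (K : nat) (hK : (1 <= K)%N) (loss : nat -> 'I_K -> R).

Local Notation D := (ah_Delta loss).
Local Notation L := (cumL loss).

Lemma cumLS t k : L t.+1 k = L t k + loss t.+1 k.
Proof. by rewrite /cumL big_nat_recr. Qed.

Lemma mix_eq t : let eta := ah_eta K (D t) in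
  mixloss loss eta (expw eta (L t)) t.+1 = Phi eta (L t.+1) - Phi eta (L t).
Proof.
move=> eta; case: eta => [e|] //=.
set Z := \sum_j expR (- (e * L t j)).
have Z0 : 0 < Z by exact: sumexp_gt0.
have -> : \sum_k expR (- (e * L t k)) / Z * expR (- (e * loss t.+1 k)) =
          (\sum_k expR (- (e * L t.+1 k))) / Z.
  rewrite mulr_suml; apply: eq_bigr => k _.
  by rewrite cumLS mulrDr opprD expRD; ring.
rewrite ln_div ?posrE ?sumexp_gt0 //; ring.
Qed.

Variable T : nat.
Hypothesis hl : forall t k, (1 <= t <= T)%N -> 0 <= loss t k <= 1.

Lemma delta_ge0 t : (t < T)%N -> 0 <= D t ->
  0 <= hloss loss (expw (ah_eta K (D t)) (L t)) t.+1
       - mixloss loss (ah_eta K (D t)) (expw (ah_eta K (D t)) (L t)) t.+1.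
Proof.
move=> tT D0; rewrite subr_ge0.
have l0 k : 0 <= loss t.+1 k.
  by case/andP: (@hl t.+1 k tT).
rewrite /ah_eta; case: ifP => _; last first.
  apply: jensen_mix => //.
  - by rewrite divr_ge0 // ln_ge0 // ler1n.
  - by move=> k; exact: expw_ge0.
  - exact: expw_sum.
  rewrite /=.
  set w := expw None (L t).
  have -> : Lstar loss t.+1 - Lstar loss t = \sum_k w k * (Lstar loss t.+1 - Lstar loss t).
    by rewrite -mulr_suml expw_sum // mul1r.
  rewrite /hloss -subr_ge0 -sumrB sumr_ge0 // => k _.
  rewrite -mulrBr /w /=; case: ifP => [/eqP Hk|_]; last by rewrite mul0r.
  rewrite mulr_ge0 ?invr_ge0 ?ler0n // subr_ge0.
  have := minL_le (L t.+1) k; rewrite /Lstar -Hk cumLS; lra.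
Qed.

Lemma D_S t : D t.+1 = D t + (hloss loss (expw (ah_eta K (D t)) (L t)) t.+1
       - mixloss loss (ah_eta K (D t)) (expw (ah_eta K (D t)) (L t)) t.+1).
Proof. by []. Qed.

Lemma D_ge0 t : (t <= T)%N -> 0 <= D t.
Proof.
elim: t => [|t IH] tT; first by [].
rewrite D_S addr_ge0 // ?IH ?(ltnW tT) //.
by apply: delta_ge0 => //; apply: IH; exact: ltnW.
Qed.

Lemma D_mono t : (t < T)%N -> D t <= D t.+1.
Proof.
move=> tT; rewrite D_S lerDl; apply: delta_ge0 => //.
by apply: D_ge0; exact: ltnW.
Qed.

Lemma lnK_gt0 : (2 <= K)%N -> 0 < ln K%:R :> R.
Proof. by move=> h; apply: ln_gt0; rewrite ltr1n. Qed.

Lemma step_c (hK2 : (2 <= K)%N) D1 D2 (Lf : 'I_K -> R) : 0 <= D1 -> D1 <= D2 ->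
  Phi (ah_eta K D1) Lf + D1 <= Phi (ah_eta K D2) Lf + D2.
Proof.
move=> D10 D12.
have lk := lnK_gt0 hK2.
move: D10 D12.
rewrite /ah_eta; case: (eqVneq D1 0) => [->|D1n0]; case: (eqVneq D2 0) => [->|D2n0] // D10 D12.
- have D2p : 0 < D2 by rewrite lt0r D2n0 (le_trans D10).
  have ep : 0 < ln K%:R / D2 by rewrite divr_gt0.
  have := Phi_ge hK Lf ep.
  have -> : ln K%:R / (ln K%:R / D2) = D2 by field; apply/andP; split; apply: lt0r_neq0.
  by change (Phi None Lf) with (minL Lf); rewrite addr0; lra.
- have D1p : 0 < D1 by rewrite lt0r D1n0.
  by have : False by lra.
- have D1p : 0 < D1 by rewrite lt0r D1n0.
  have D2p : 0 < D2 by apply: lt_le_trans D12.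
  have ep : 0 < ln K%:R / D2 by rewrite divr_gt0.
  have := Phi_mono hK Lf ep (_ : ln K%:R / D2 <= ln K%:R / D1).
  have -> : ln K%:R / (ln K%:R / D2) = D2 by field; apply/andP; split; apply: lt0r_neq0.
  have -> : ln K%:R / (ln K%:R / D1) = D1 by field; apply/andP; split; apply: lt0r_neq0.
  apply.
  by rewrite ler_pM2l // lef_pV2 ?posrE.
Qed.

Lemma L0 k : L 0 k = 0.
Proof. by rewrite /cumL big_geq. Qed.

Lemma H_S t : ah_H loss t.+1 = ah_H loss t + hloss loss (expw (ah_eta K (D t)) (L t)) t.+1.
Proof. by rewrite /ah_H big_nat_recr. Qed.

Lemma inv (hK2 : (2 <= K)%N) t : (t <= T)%N ->
  ah_H loss t <= Phi (ah_eta K (D t)) (L t) + 2 * D t.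
Proof.
elim: t => [|t IH] tT.
  rewrite /ah_H big_geq // /ah_eta /= eqxx /=.
  case: (minL_ex hK (L 0)) => k ->; by rewrite L0 mulr0 addr0.
have IH' := IH (ltnW tT).
have Dm := D_mono tT.
have D0 := D_ge0 (ltnW tT).
have Sc := step_c hK2 (L t.+1) D0 Dm.
have M := mix_eq t.
have DS := D_S t.
rewrite H_S.
rewrite M in DS.
lra.
Qed.

Lemma regret : (1 <= T)%N -> ah_H loss T <= Lstar loss T + 2 * D T.
Proof.
move=> T1.
have DT0 := D_ge0 (leqnn T).
case: (ltnP 1 K) => [hK2|hK1].
  apply: le_trans (inv hK2 (leqnn T)) _.
  rewrite lerD2r /Lstar /ah_eta.
  case: (eqVneq (D T) 0) => [_|Dn0] //.
  apply: Phi_le_min => //.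
  by rewrite divr_gt0 ?lnK_gt0 // lt0r Dn0.
have k0 : 'I_K by exists 0%N.
have o0 (j : 'I_K) : val j = 0%N.
  by case: j => j hj /=; apply/eqP; rewrite -leqn0 -ltnS (leq_trans hj hK1).
have one (F : 'I_K -> R) : \sum_k F k = F k0.
  rewrite (bigD1 k0) //= big1 ?addr0 // => j /eqP jk; exfalso; apply: jk.
  by apply: val_inj; rewrite !o0.
have HH : ah_H loss T = L T k0.
  rewrite /ah_H /cumL; apply: eq_big_nat => t _.
  rewrite /hloss /ah_w one.
  have := expw_sum hK (ah_eta K (D t.-1)) (L t.-1); rewrite one => ->.
  by rewrite mul1r.
have -> : Lstar loss T = L T k0.
  by case: (minL_ex hK (L T)) => k; rewrite /Lstar => ->; congr L; apply: val_inj; rewrite !o0.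
rewrite HH; lra.
Qed.

End AH.

Section Var.
Variables (R : realType) (K : nat) (hK : (1 <= K)%N) (loss : nat -> 'I_K -> R).

Lemma lvar_le (w : 'I_K -> R) t : (forall k, 0 <= loss t k <= 1) ->
  (forall k, 0 <= w k) -> \sum_k w k = 1 ->
  lvar loss w t <= hloss loss w t - (hloss loss w t) ^+ 2.
Proof.
move=> l01 w0 w1.
set h := hloss loss w t.
have E1 : lvar loss w t = \sum_k (w k * loss t k ^+ 2 - 2 * h * (w k * loss t k) + h ^+ 2 * w k).
  by apply: eq_bigr => k _; rewrite /h; ring.
have E2 : \sum_k (w k * loss t k ^+ 2 - 2 * h * (w k * loss t k) + h ^+ 2 * w k)
    = \sum_k w k * loss t k ^+ 2 - h ^+ 2.
  rewrite big_split /= sumrB -!mulr_sumr w1.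
  have -> : \sum_k w k * loss t k = h by [].
  ring.
rewrite E1 E2.
rewrite lerD2r /h /hloss; apply: ler_sum => k _.
rewrite ler_wpM2l //; case/andP: (l01 k) => a b.
by rewrite expr2 ler_piMl.
Qed.

Lemma cauchy (f : nat -> R) T : (1 <= T)%N ->
  (\sum_(1 <= t < T.+1) f t) ^+ 2 <= T%:R * \sum_(1 <= t < T.+1) f t ^+ 2.
Proof.
move=> T1.
set S := \sum_(1 <= t < T.+1) f t.
set Q := \sum_(1 <= t < T.+1) f t ^+ 2.
have Tp : 0 < T%:R :> R by rewrite ltr0n.
have E : \sum_(1 <= t < T.+1) (f t - S / T%:R) ^+ 2 = Q - S ^+ 2 / T%:R.
  transitivity (\sum_(1 <= t < T.+1) (f t ^+ 2 - 2 * (S / T%:R) * f t + (S / T%:R) ^+ 2)).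
    by apply: eq_bigr => t _; ring.
  rewrite big_split /= sumrB -mulr_sumr sumr_const_nat subSS subn0 -/S -/Q -mulr_natr.
  by field; rewrite lt0r_neq0.
have : 0 <= Q - S ^+ 2 / T%:R by rewrite -E sumr_ge0 // => t _; exact: sqr_ge0.
rewrite subr_ge0 ler_pdivrMr // mulrC //.
Qed.

Lemma final_alg (T V H Q Ls Dl : R) : 0 < T -> 0 <= Ls -> Ls <= H -> H <= Ls + 2 * Dl ->
  H ^+ 2 <= T * Q -> V <= H - Q -> V <= Ls * (T - Ls) / T + 2 * Dl.
Proof.
move=> T0 L0 LH HL HQ VH.
have q : H ^+ 2 / T <= Q by rewrite ler_pdivrMr // mulrC.
have l2 : Ls ^+ 2 / T <= H ^+ 2 / T.
  rewrite ler_pM2r ?invr_gt0 // !expr2; apply: ler_pM => //.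
have e : Ls * (T - Ls) / T = Ls - Ls ^+ 2 / T by field; rewrite lt0r_neq0.
rewrite e; lra.
Qed.

End Var.

Unset Implicit Arguments.
Theorem lemma7 (R : realType) (K T : nat) (loss : nat -> 'I_K -> R)
  (hK : (1 <= K)%N) (hT : (1 <= T)%N)
  (hloss01 : forall t k, (1 <= t <= T)%N -> 0 <= loss t k <= 1)
  (hHL : Lstar loss T <= ah_H loss T) :
  ah_V loss T <= Lstar loss T * (T%:R - Lstar loss T) / T%:R + 2 * ah_Delta loss T.
Proof.
have Hreg := regret hK hloss01 hT.
have L0 : 0 <= Lstar loss T.
  case: (minL_ex hK (cumL loss T)) => k; rewrite /Lstar => ->.
  rewrite /cumL big_nat_cond sumr_ge0 // => t /andP[/andP[t1 tT] _].
  by case/andP: (hloss01 t k (andb_true_intro (conj t1 tT))).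
have VH : ah_V loss T <= ah_H loss T - \sum_(1 <= t < T.+1) (hloss loss (ah_w loss t) t) ^+ 2.
  rewrite /ah_V /ah_H -sumrB big_nat_cond [X in _ <= X]big_nat_cond.
  apply: ler_sum => t /andP[/andP[t1 tT] _]; apply: lvar_le.
  - by move=> k; exact: (hloss01 t k (andb_true_intro (conj t1 tT))).
  - by move=> k; exact: expw_ge0.
  - exact: expw_sum.
have CS := cauchy (fun t => hloss loss (ah_w loss t) t) hT; rewrite /= -/(ah_H loss T) in CS.
apply: (final_alg _ L0 hHL Hreg CS VH).
by rewrite ltr0n.
Qed.
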